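(* Let $\mathcal{H}$ be the Hilbert space described in the context and $p\in[1,\infty)$. Let $\mu$ be a Borel probability measure on $\mathcal{H}$ such that for some $s>2p$, $$\widetilde{M}_s(\mu):=\int \Big(\sum_{j=1}^{\infty}\frac{1}{\lambda_j^2}\langle x, \psi_j\rangle^2_{L^2} \Big)^{\frac{s}{2}}\,\mu(dx) <\infty,$$ and assume there are constants $\gamma,c,C>0$ with $\lambda_j\le C\exp(-cj^\gamma)$ for all $j\ge1$. Then $$\int_{\mathcal{H}} \|\mathrm{Proj}^d (x)-x\|^q_{\mathcal{H}}\,\mu(dx) \leq C \exp\left(-c qd^\gamma\right)$$ for all $d\geq 1$ and all $q\in [p,s]$, where the constant $c$ depends only on $\widetilde{M}_s(\mu)$ and the constant $C$ depends only on $q$ and $\widetilde{M}_s(\mu)$.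
   Context: Let $(\Omega,m)$ be a measure space, $(\psi_j)_{j\ge1}$ an orthonormal basis of $L^2(\Omega,m)$ with inner product $\langle\cdot,\cdot\rangle_{L^2}$, and $(\lambda_j)_{j\ge1}$ a non-increasing sequence of positive numbers converging to $0$. Let $\mathcal{H}=\{f\in L^2(\Omega,m):\sum_j\langle f,\psi_j\rangle_{L^2}^2/\lambda_j<\infty\}$ with inner product $\langle f,g\rangle_{\mathcal{H}}=\sum_j\lambda_j^{-1}\langle f,\psi_j\rangle_{L^2}\langle g,\psi_j\rangle_{L^2}$ and norm $\|\cdot\|_{\mathcal{H}}$. $\mathrm{Proj}^d$ is the orthogonal projection onto $\mathrm{span}\{\sqrt{\lambda_j}\psi_j:j=1,\dots,d\}$. *)

(* Defs.v *)
From HB Require Import structures.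
From mathcomp Require Import all_boot all_order all_algebra.
From mathcomp Require Import all_classical all_reals all_analysis.
Set Implicit Arguments. Unset Strict Implicit. Unset Printing Implicit Defensive.
Import Order.TTheory GRing.Theory Num.Theory.
Import numFieldNormedType.Exports.
Local Open Scope classical_set_scope.
Local Open Scope ring_scope.

Section HilbertSetting.
Context {d : measure_display} {Omega : measurableType d} {R : realType}.
Variables (m : {measure set Omega -> \bar R}) (psi : nat -> Omega -> R)
  (lam : nat -> R).

Definition inL2 (f : Omega -> R) : Prop :=
  measurable_fun setT f /\ (\int[m]_w (((f w) ^+ 2)%:E) < +oo)%E.

Definition L2ip (f g : Omega -> R) : R := Rintegral m setT (fun w => f w * g w).

Definition Hnorm2 (f : Omega -> R) : \bar R :=
  (\sum_(0 <= j <oo) (((L2ip f (psi j)) ^+ 2 / lam j)%:E))%E.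

Definition Hnorm (f : Omega -> R) : \bar R := (Hnorm2 f `^ (2^-1))%E.

Definition inH (f : Omega -> R) : Prop := inL2 f /\ (Hnorm2 f < +oo)%E.

Definition Hip (f g : Omega -> R) : R :=
  limn (fun n => \sum_(0 <= j < n) ((lam j)^-1 * L2ip f (psi j) * L2ip g (psi j))).

(* the H-orthonormal family sqrt(lambda_j) psi_j *)
Definition Hbasis (j : nat) : Omega -> R := fun w => Num.sqrt (lam j) * psi j w.

(* Proj^d : orthogonal projection (in H) onto span{sqrt(lambda_j) psi_j : j < d}
   (0-indexed: paper's indices 1..d are j = 0..d-1) *)
Definition Proj (n : nat) (f : Omega -> R) : Omega -> R :=
  fun w => \sum_(j < n) Hip f (Hbasis j) * Hbasis j w.

Definition L2_orthonormal_basis : Prop :=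
  (forall j, inL2 (psi j)) /\
  (forall i j, L2ip (psi i) (psi j) = (i == j)%:R) /\
  (forall f, inL2 f ->
     (fun n => \int[m]_w (((f w - \sum_(j < n) L2ip f (psi j) * psi j w) ^+ 2)%R)%:E)%E
       @ \oo --> 0%E).

Lemma inH0 : inH (fun _ => 0).
Proof.
have ip0 : forall g, L2ip (fun _ => 0) g = 0.
  move=> g; rewrite /L2ip /Rintegral; under eq_fun do rewrite mul0r.
  by rewrite integral0.
split; first split.
- exact: measurable_cst.
- under eq_integral do rewrite expr0n /=.
  by rewrite integral0.
- rewrite /Hnorm2.
  rewrite eseries0 //= => i _ _.
  by rewrite ip0 expr0n /= mul0r.
Qed.

Definition Hsub := {f : Omega -> R | inH f}.
HB.instance Definition _ := gen_eqMixin Hsub.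
HB.instance Definition _ := gen_choiceMixin Hsub.
HB.instance Definition _ := isPointed.Build Hsub (exist _ (fun _ => 0) inH0).

Definition Hopen (U : set Hsub) : Prop :=
  forall f, U f -> exists2 r : R, 0 < r &
    forall g : Hsub, (Hnorm (fun w => (sval g w - sval f w)%R) < r%:E)%E -> U g.

Definition Hborel := g_sigma_algebraType Hopen.

Definition Mtilde_integrand (s : R) (x : Hsub) : \bar R :=
  ((\sum_(0 <= j <oo) (((L2ip (sval x) (psi j)) ^+ 2 / (lam j) ^+ 2)%:E)) `^ (s / 2))%E.

End HilbertSetting.
Arguments Mtilde_integrand {d Omega R} m psi lam s x.

(* Main.v *)
Require Import Defs.
From HB Require Import structures.
From mathcomp Require Import all_boot all_order all_algebra.
From mathcomp Require Import all_classical all_reals all_analysis.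
From mathcomp Require Import ring lra measurable_realfun.
Import Order.TTheory GRing.Theory Num.Theory.
Import numFieldNormedType.Exports.
Local Open Scope classical_set_scope.
Local Open Scope ring_scope.

Section S.
Context {dd : measure_display} {Omega : measurableType dd} {R : realType}.
Variables (m : {measure set Omega -> \bar R}).

Lemma L2_sq_int f : inL2 m f -> m.-integrable setT (EFin \o (fun w => f w ^+ 2)).
Proof.
move=> [mf fi]; apply/integrableP; split.
  by apply/measurable_EFinP; apply: measurable_funX.
rewrite /=; under eq_integral => x _ do rewrite ger0_norm ?sqr_ge0//.
exact: fi.
Qed.

Lemma L2_int f g : inL2 m f -> inL2 m g ->
  m.-integrable setT (EFin \o (fun w => f w * g w)).
Proof.
move=> hf hg.
have := integrableD measurableT (L2_sq_int _ hf) (L2_sq_int _ hg).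
apply: le_integrable => //.
  by apply/measurable_EFinP; apply: measurable_funM; [case: hf|case: hg].
move=> x _ /=; rewrite !lee_fin.
rewrite [X in _ <= X]ger0_norm ?addr_ge0 ?sqr_ge0// normrM.
have ha := normr_ge0 (f x); have hb := normr_ge0 (g x).
rewrite -(real_normK (num_real (f x))) -(real_normK (num_real (g x))).
nra.
Qed.

Lemma L2ipB g1 g2 h : m.-integrable setT (EFin \o (fun w => g1 w * h w)) ->
  m.-integrable setT (EFin \o (fun w => g2 w * h w)) ->
  L2ip m (fun w => g1 w - g2 w) h = L2ip m g1 h - L2ip m g2 h.
Proof.
move=> i1 i2; rewrite /L2ip -RintegralB//.
by apply: eq_Rintegral => w _; rewrite mulrBl.
Qed.

Variables (psi : nat -> Omega -> R).
Hypothesis hpsi : forall j, inL2 m (psi j).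

Lemma L2ip_sum (a : nat -> R) i n :
  m.-integrable setT (EFin \o (fun w => (\sum_(j < n) a j * psi j w) * psi i w)) /\
  L2ip m (fun w => \sum_(j < n) a j * psi j w) (psi i)
    = \sum_(j < n) a j * L2ip m (psi j) (psi i).
Proof.
elim: n => [|n [IHi IHe]].
  split.
    apply: (eq_integrable measurableT _ _ _ (integrable0 m setT)) => w _.
    by rewrite /= big_ord0 mul0r.
  rewrite big_ord0 /L2ip.
  under eq_Rintegral do rewrite big_ord0 mul0r.
  by rewrite Rintegral_cst// mul0r.
have ii : m.-integrable setT (EFin \o (fun w => a n * (psi n w * psi i w))).
  apply: (eq_integrable measurableT _ _ _ (integrableZl measurableT (a n) (L2_int _ _ (hpsi n) (hpsi i)))) => w _.
  by [].
split.
  apply: (eq_integrable measurableT _ _ _ (integrableD measurableT IHi ii)) => w _.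
  by rewrite /= big_ord_recr /= mulrDl mulrA.
rewrite big_ord_recr /= -IHe /L2ip -RintegralZl //.
move: (RintegralD measurableT IHi ii) => /= <-.
  by apply: eq_Rintegral => w _; rewrite big_ord_recr /= mulrDl mulrA.
exact: L2_int _ _ (hpsi n) (hpsi i).
Qed.

Lemma sum_delta_ord n i (a : nat -> R) :
  \sum_(j < n) a j * ((j : nat) == i)%:R = if (i < n)%N then a i else 0.
Proof.
case: ltnP => h.
  rewrite (bigD1 (Ordinal h)) //= eqxx mulr1 big1 ?addr0 // => j /negPf.
  by rewrite -val_eqE /= => ->; rewrite mulr0.
rewrite big1 // => j _.
by rewrite ltn_eqF ?mulr0 // (leq_trans (ltn_ord j) h).
Qed.

Hypothesis orth : forall i j, L2ip m (psi i) (psi j) = (i == j)%:R.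
Variables (lam : nat -> R).
Hypothesis lam_pos : forall j, 0 < lam j.

Lemma L2ip_Hbasis j i : L2ip m (Hbasis psi lam j) (psi i) = Num.sqrt (lam j) * (i == j)%:R.
Proof.
rewrite /L2ip /Hbasis.
under eq_Rintegral do rewrite -mulrA.
rewrite RintegralZl //; last exact: L2_int.
by congr (_ * _); rewrite eq_sym; exact: (orth j i).
Qed.

Lemma Hip_Hbasis f j :
  Hip m psi lam f (Hbasis psi lam j) = (lam j)^-1 * L2ip m f (psi j) * Num.sqrt (lam j).
Proof.
rewrite /Hip; apply: (lim_near_cst (@Rhausdorff R)); near=> n.
rewrite big_mkord.
under eq_bigr do rewrite L2ip_Hbasis mulrA.

rewrite (sum_delta_ord n j (fun i => (lam i)^-1 * L2ip m f (psi i) * Num.sqrt (lam j))).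
by rewrite ifT //; near: n; exact: nbhs_infty_gt.
Unshelve. all: by end_near.
Qed.

Lemma Proj_eq n f :
  Proj m psi lam n f = fun w => \sum_(j < n) L2ip m f (psi j) * psi j w.
Proof.
apply/funext => w; apply: eq_bigr => j _; rewrite Hip_Hbasis /Hbasis.
have hs : Num.sqrt (lam j) * Num.sqrt (lam j) = lam j.
  by rewrite -expr2 sqr_sqrtr // ltW.
have -> : (lam j)^-1 * L2ip m f (psi j) * Num.sqrt (lam j) * (Num.sqrt (lam j) * psi j w)
  = (lam j)^-1 * (Num.sqrt (lam j) * Num.sqrt (lam j)) * (L2ip m f (psi j) * psi j w) by ring.
by rewrite hs mulVf ?gt_eqF // mul1r.
Qed.

Lemma L2ip_diff n f i : inL2 m f ->
  L2ip m (fun w => Proj m psi lam n f w - f w) (psi i)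
  = if (i < n)%N then 0 else - L2ip m f (psi i).
Proof.
move=> hf; rewrite Proj_eq /=.
have [I1 E1] := L2ip_sum (fun j => L2ip m f (psi j)) i n.
rewrite L2ipB //; last exact: L2_int.
rewrite E1; under eq_bigr do rewrite orth.
by rewrite (sum_delta_ord n i (fun j => L2ip m f (psi j))); case: ifP => _; rewrite ?subrr ?sub0r.
Qed.

Hypothesis lam_noninc : forall i j : nat, (i <= j)%N -> lam j <= lam i.

Lemma Hnorm2_diff_le n f : inL2 m f ->
  (Hnorm2 m psi lam (fun w => (Proj m psi lam n f w - f w)%R)
   <= (lam n)%:E * \sum_(0 <= j <oo) (((L2ip m f (psi j)) ^+ 2 / (lam j) ^+ 2)%:E))%E.
Proof.
move=> hf; rewrite /Hnorm2 -nneseriesZl; last first.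
  by move=> j _; rewrite lee_fin divr_ge0 ?sqr_ge0.
apply: lee_nneseries => [j _ _|j _].
  by rewrite lee_fin divr_ge0 ?sqr_ge0 // ltW.
rewrite L2ip_diff // -EFinM lee_fin.
case: ltnP => hj.
  by rewrite expr2 !mul0r mulr_ge0 ?divr_ge0 ?sqr_ge0 // ltW.
rewrite sqrrN.
have hl := lam_noninc _ _ hj; have lj := lam_pos j.
have -> : L2ip m f (psi j) ^+ 2 / lam j = lam j * (L2ip m f (psi j) ^+ 2 / lam j ^+ 2).
  by field; rewrite gt_eqF.
by rewrite ler_wpM2r // divr_ge0 ?sqr_ge0.
Qed.
End S.

Lemma nonneg_sum {R : realType} (u : nat -> R) : (forall j, 0 <= u j) ->
  (0 <= \sum_(0 <= j <oo) (u j)%:E)%E.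
Proof. by move=> h; apply: nneseries_ge0 => j _ _; rewrite lee_fin. Qed.


Import HBNNSimple.
Section I.
Context {dT : measure_display} {T : measurableType dT} {R : realType}.

Lemma le_int_gen (mu : {measure set T -> \bar R}) (F1 F2 : T -> \bar R) :
  (forall x, (0 <= F1 x)%E) -> (forall x, (F1 x <= F2 x)%E) ->
  (\int[mu]_x F1 x <= \int[mu]_x F2 x)%E.
Proof.
move=> F10 F12.
have F20 : forall x, (0 <= F2 x)%E by move=> x; exact: le_trans (F10 x) (F12 x).
rewrite (ge0_integralTE _ F10) (ge0_integralTE _ F20) /=.
apply: ereal_sup_le => _ [h hF <-]; exists h => //= x.
exact: le_trans (hF x) (F12 x).
Qed.

Lemma int_bound (mu : probability T R) (F G : T -> \bar R) (k : R) :
  0 < k -> (forall x, (0 <= F x)%E) -> (forall x, (0 <= G x)%E) ->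
  (forall x, (F x <= k%:E * (1 + G x))%E) ->
  (\int[mu]_x F x <= k%:E * (1 + \int[mu]_x G x))%E.
Proof.
move=> k0 F0 G0 FG.
rewrite (ge0_integralTE _ F0) /=.
apply: ge_ereal_sup => _ [h hF <-].
rewrite -integralT_nnsfun.
pose g x := Num.max (h x - k) 0 / k.
have mh : measurable_fun setT h by exact: measurable_funPT.
have mg : measurable_fun setT g.
  apply: measurable_funM; last exact: measurable_cst.
  apply: measurable_maxr; last exact: measurable_cst.
  by apply: measurable_funB => //; exact: measurable_cst.
have g0 x : 0 <= g x by rewrite /g divr_ge0 ?le_max ?lexx ?orbT// ltW.
have h0 x : 0 <= h x by [].
apply: (@le_trans _ _ (\int[mu]_x (k%:E + k%:E * (g x)%:E))%E).
  apply: le_int_gen => x; first by rewrite lee_fin.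
  rewrite -EFinM -EFinD lee_fin /g mulrCA divff ?gt_eqF// mulr1.
  by rewrite -lerBlDl le_max lexx.
rewrite ge0_integralD//; last 3 first.
- by move=> x _; rewrite lee_fin ltW.
- by move=> x _; rewrite -EFinM lee_fin mulr_ge0// ltW.
- by apply/measurable_EFinP; apply: measurable_funM => //; exact: measurable_cst.
rewrite integral_cst//.
set MM := (X in (k%:E * X + _)%E); have -> : MM = 1%E by exact: probability_setT.
rewrite mule1.
rewrite ge0_integralZl_EFin//; last 3 first.
- by move=> x _; rewrite lee_fin.
- exact/measurable_EFinP.
- exact: ltW.
rewrite [X in (_ <= X)%E]ge0_muleDr //; last by apply: integral_ge0 => x _; exact: G0.
rewrite mule1; apply: leeD2l; rewrite lee_pmul2l ?lte_fin//.
apply: le_int_gen => x; first by rewrite lee_fin.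
have := FG x; have := hF x => /= hx FGx.
rewrite /g; case: (lerP (h x - k) 0) => hk.
  by rewrite mul0r.

move: FGx; have := G0 x; case: (G x) => [r||] //=.
  rewrite !lee_fin => r0 hr.
  have := le_trans hx hr. rewrite -EFinD -EFinM lee_fin => hr2.
  rewrite ler_pdivrMr //; lra.
by move=> _ _; rewrite leey.
Qed.
End I.

Lemma pw_bound {R : realType} (X T : \bar R) (a q s : R) :
  (0 <= X)%E -> (0 <= T)%E -> 0 < a -> 0 < q -> q <= s -> (X <= a%:E * T)%E ->
  ((X `^ 2^-1) `^ q <= (a `^ (q / 2))%:E * (1 + T `^ (s / 2)))%E.
Proof.
move=> X0 T0 a0 q0 qs XT.
rewrite -poweRrM.
have r0 : 0 <= 2^-1 * q by rewrite mulr_ge0 // ltW.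
have aT0 : (0 <= a%:E * T)%E by rewrite mule_ge0 // lee_fin ltW.
apply: le_trans (gt0_ler_poweR r0 _ _ XT) _.
- by rewrite in_itv /= X0 leey.
- by rewrite in_itv /= aT0 leey.
rewrite poweRM //; last by rewrite lee_fin ltW.
rewrite poweR_EFin (mulrC _ q).
apply: lee_pmul; [by rewrite lee_fin powR_ge0 | exact: poweR_ge0 | by [] | ].
have qp : 0 < q / 2 by rewrite divr_gt0.
clear XT aT0; move: T0; case: T => [t||] //.
- rewrite lee_fin => t0; rewrite !poweR_EFin -EFinD lee_fin.
  case: (lerP t 1) => t1.
    apply: le_trans (_ : 1 <= _); last by rewrite lerDl powR_ge0.
    have := @ge0_ler_powR R (q / 2) (ltW qp) t 1.
    rewrite powR1 => H; apply: H => //; rewrite nnegrE //.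
  apply: le_trans (_ : t `^ (s / 2) <= _); last by rewrite lerDr.
  apply: ler_powR; first exact: ltW.
  by rewrite ler_pM2r.
- move=> _; rewrite poweRyr ?gt_eqF //; first by rewrite poweRyr ?leey // gt_eqF // divr_gt0 // (lt_le_trans q0 qs).
Qed.


Theorem lemma6p5 (d : measure_display) (Omega : measurableType d) (R : realType)
  (m : {measure set Omega -> \bar R}) (psi : nat -> Omega -> R) (lam : nat -> R)
  (onb : L2_orthonormal_basis m psi)
  (lam_pos : forall j, 0 < lam j)
  (lam_noninc : forall i j : nat, (i <= j)%N -> lam j <= lam i)
  (lam_cvg : lam @ \oo --> 0)
  (p s gam c C : R) (hp : 1 <= p) (hs : 2 * p < s)
  (hgam : 0 < gam) (hc : 0 < c) (hC : 0 < C)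
  (decay : forall j : nat, lam j <= C * expR (- c * (j.+1)%:R `^ gam)) :
  forall M : R, exists2 c' : R, 0 < c' &
    forall q : R, p <= q <= s -> exists2 C' : R, 0 < C' &
      forall mu : probability (Hborel m psi lam) R,
        (\int[mu]_x Mtilde_integrand m psi lam s x = M%:E)%E ->
        forall n : nat, (1 <= n)%N ->
        (\int[mu]_x (Hnorm m psi lam
             (fun w => (Proj m psi lam n (sval x) w - sval x w)%R) `^ q)
           <= (C' * expR (- c' * q * n%:R `^ gam))%:E)%E.
Proof.
case: onb => hpsi [orth _].
move=> M; exists (c / 2); first by rewrite divr_gt0.
move=> q /andP[pq qs].
have q0 : 0 < q by apply: lt_le_trans pq; apply: lt_le_trans hp.
have M0 := normr_ge0 M.
exists (C `^ (q / 2) * (1 + `|M|)).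
  by rewrite mulr_gt0 ?powR_gt0 //; lra.
move=> mu hM n n1.
pose k := lam n `^ (q / 2).
have k0 : 0 < k by rewrite powR_gt0.
have H := int_bound mu (fun x : Hborel m psi lam => (Hnorm m psi lam
             (fun w => (Proj m psi lam n (sval x) w - sval x w)%R) `^ q)%E)
   (Mtilde_integrand m psi lam s) k k0.
apply: le_trans (H _ _ _) _.
- by move=> x; exact: poweR_ge0.
- by move=> x; exact: poweR_ge0.
- move=> x; apply: pw_bound => //.
  + by apply: nonneg_sum => j; rewrite divr_ge0 ?sqr_ge0 // ltW.
  + by apply: nonneg_sum => j; rewrite divr_ge0 ?sqr_ge0.
  + exact: Hnorm2_diff_le (proj1 (proj2_sig x)).
rewrite hM -EFinD -EFinM lee_fin.
have hK : k <= C `^ (q / 2) * expR (- (c / 2) * q * n%:R `^ gam).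
  have q2 : 0 <= q / 2 by rewrite divr_ge0 // ltW.
  apply: (@le_trans _ _ ((C * expR (- c * (n.+1)%:R `^ gam)) `^ (q / 2))).
    apply: ge0_ler_powR => //; rewrite ?nnegrE ?ltW //.
    by rewrite mulr_gt0 ?expR_gt0.
  rewrite powRM; last 2 first.
  - exact: ltW.
  - exact: expR_ge0.
  rewrite ler_wpM2l ?powR_ge0 //.
  have E y r : expR y `^ r = expR (r * y) by rewrite /powR gt_eqF ?expR_gt0 // expRK.
  rewrite E ler_expR.
  have N01 : n%:R `^ gam <= (n.+1)%:R `^ gam :> R.
    apply: ge0_ler_powR; rewrite ?nnegrE ?ler0n ?ler_nat ?ltW //.
  have cq := mulr_gt0 hc q0.
  nra.
have hMM : M <= `|M| := ler_norm M.
have K0 : 0 <= C `^ (q / 2) * expR (- (c / 2) * q * n%:R `^ gam).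
  by rewrite mulr_ge0 ?powR_ge0 ?expR_ge0.
nra.
Qed.
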